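(* Let $\{z_n\}_{n \geq 1}$ be a sequence in $\mathbb{C} \setminus\{i\}$. Then $\prod_{n \geq 1} z_n$ converges absolutely if and only if $\prod_{n \geq 1} T(z_n)$ converges absolutely.
   Context: $T(z) = i\frac{1-iz}{1+iz}$ (defined for $z\neq i$). A product $\prod_{n\ge1} w_n$ is said to converge absolutely if $\sum_{n\ge1}|1-w_n|<\infty$. *)

(* Defs.v *)
From Stdlib Require Import Reals.
From Coquelicot Require Import Coquelicot.
Open Scope R_scope.

(* T(z) = i (1 - i z) / (1 + i z); Coquelicot's division is total, the
   relevant hypothesis z <> i guarantees 1 + i z <> 0. *)
Definition T (z : C) : C := (Ci * ((1 - Ci * z) / (1 + Ci * z)))%C.

(* The product prod_{n>=1} w_n converges absolutely iff
   sum_{n>=1} |1 - w_n| < oo.  Sequences are nat -> C, terms indexed n >= 1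
   (the value at index 0 is ignored). *)
Definition abs_conv_prod (w : nat -> C) : Prop :=
  ex_series (fun n => Cmod (1 - w (S n))%C).

(* Main.v *)
Require Import Defs.
From Stdlib Require Import Reals Lra Lia Psatz.
From Coquelicot Require Import Coquelicot.

Lemma cmp_series (a b : nat -> R) :
  ex_series b -> (forall n, 0 <= a n) ->
  (exists N, forall n, (N <= n)%nat -> a n <= 2 * b n) -> ex_series a.
Proof.
  intros Hb Ha [N HN].
  apply (ex_series_incr_n a N).
  apply (@ex_series_le R_AbsRing R_CompleteNormedModule _ (fun k => scal 2 (b (N + k)%nat))).
  - intros n. change (norm (a (N + n)%nat)) with (Rabs (a (N + n)%nat)).
    rewrite Rabs_pos_eq; [|apply Ha].
    change (scal 2 (b (N + n)%nat)) with (2 * b (N + n)%nat). apply HN. lia.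
  - apply (@ex_series_scal R_AbsRing R_NormedModule 2 (fun k => b (N+k)%nat)). now apply (ex_series_incr_n b N).
Qed.

Lemma ev_small (b : nat -> R) : ex_series b ->
  exists N, forall n, (N <= n)%nat -> Rabs (b n) < /2.
Proof.
  intros Hb. apply ex_series_lim_0 in Hb.
  apply is_lim_seq_spec in Hb.
  destruct (Hb (mkposreal (/2) ltac:(lra))) as [N HN].
  exists N. intros n Hn. specialize (HN n Hn). simpl in HN.
  rewrite Rminus_0_r in HN. exact HN.
Qed.

Lemma key (z : C) : (1 + Ci * z <> 0)%C -> (T z * (1 + Ci*z) = Ci * (1 - Ci*z))%C.
Proof. intros H. unfold T. field. exact H. Qed.

Lemma id1 (z : C) : (1 + Ci * z <> 0)%C ->
  ((1 - T z) * (1 + Ci*z) = (1 - Ci) * (1 - z))%C.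
Proof.
  intros H.
  replace ((1 - T z) * (1 + Ci*z))%C with ((1 + Ci*z) - T z * (1 + Ci*z))%C by ring.
  rewrite key by exact H. destruct z as [a b].
  apply injective_projections; simpl; ring.
Qed.

Lemma id2 (z : C) : (1 + Ci * z <> 0)%C ->
  ((1 - z) * (1 - Ci) * (T z + Ci) = (1 - T z) * (Ci + Ci))%C.
Proof.
  intros H.
  replace ((1 - z) * (1 - Ci) * (T z + Ci))%C
    with ((1 - T z) * (1 + Ci*z) * (T z + Ci))%C by (rewrite id1 by exact H; ring).
  replace ((1 - T z) * (1 + Ci*z) * (T z + Ci))%C
    with ((1 - T z) * (T z * (1 + Ci*z) + Ci * (1 + Ci*z)))%C by ring.
  rewrite key by exact H. ring.
Qed.

Lemma Cmod_1mCi : Cmod (1 - Ci)%C = sqrt 2.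
Proof. unfold Cmod. simpl. f_equal. ring. Qed.
Lemma Cmod_1pCi : Cmod (1 + Ci)%C = sqrt 2.
Proof. unfold Cmod. simpl. f_equal. ring. Qed.
Lemma Cmod_2Ci : Cmod (Ci + Ci)%C = 2.
Proof. unfold Cmod. replace (fst (Ci+Ci)%C ^2 + snd (Ci+Ci)%C ^2)%R with (2*2)%R by (simpl; ring).
  apply sqrt_square. lra. Qed.

Lemma sqrt2_ge1 : 1 <= sqrt 2.
Proof. rewrite <- sqrt_1. apply sqrt_le_1_alt. lra. Qed.

Lemma u_nz (z : C) : z <> Ci -> (1 + Ci * z <> 0)%C.
Proof.
  intros Hz H. apply Hz. destruct z as [a b].
  assert (H1 := f_equal fst H). assert (H2 := f_equal snd H). simpl in *.
  apply injective_projections; simpl; lra.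
Qed.

Lemma dir1 (z : C) : Cmod (1 - z)%C < /2 -> Cmod (1 - T z)%C <= 2 * Cmod (1 - z)%C.
Proof.
  intros Hs.
  assert (Hu : sqrt 2 / 2 <= Cmod (1 + Ci * z)%C).
  { assert (E : ((1 + Ci)%C = (1 + Ci*z) + Ci * (1 - z))%C) by ring.
    pose proof (Cmod_triangle (1 + Ci*z)%C (Ci * (1 - z))%C) as Ht.
    rewrite <- E, Cmod_1pCi, Cmod_mult, Cmod_Ci in Ht.
    pose proof sqrt2_ge1. lra. }
  assert (Hnz : (1 + Ci * z <> 0)%C).
  { intro H0. rewrite H0, Cmod_0 in Hu. pose proof sqrt2_ge1. lra. }
  pose proof (f_equal Cmod (id1 z Hnz)) as E.
  rewrite !Cmod_mult, Cmod_1mCi in E.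
  pose proof sqrt2_ge1. pose proof (Cmod_ge_0 (1 - T z)%C).
  pose proof (Cmod_ge_0 (1 - z)%C).
  nra.
Qed.

Lemma dir2 (z : C) : z <> Ci -> Cmod (1 - T z)%C < /2 -> Cmod (1 - z)%C <= 2 * Cmod (1 - T z)%C.
Proof.
  intros Hz Hs. pose proof (u_nz z Hz) as Hnz.
  assert (Hu : sqrt 2 / 2 <= Cmod (T z + Ci)%C).
  { assert (E : ((1 + Ci)%C = (T z + Ci) + (1 - T z))%C) by ring.
    pose proof (Cmod_triangle (T z + Ci)%C (1 - T z)%C) as Ht.
    rewrite <- E, Cmod_1pCi in Ht.
    pose proof sqrt2_ge1. lra. }
  pose proof (f_equal Cmod (id2 z Hnz)) as E.
  rewrite !Cmod_mult, Cmod_1mCi, Cmod_2Ci in E.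
  pose proof sqrt2_ge1. pose proof (Cmod_ge_0 (1 - T z)%C).
  pose proof (Cmod_ge_0 (1 - z)%C).
  pose proof (sqrt_sqrt 2 ltac:(lra)) as S2.
  assert (Hm : Cmod (1 - z)%C * sqrt 2 * (sqrt 2 / 2) <= Cmod (1 - z)%C * sqrt 2 * Cmod (T z + Ci)%C).
  { apply Rmult_le_compat_l; [|exact Hu]. apply Rmult_le_pos; lra. }
  nra.
Qed.

Theorem lemma4p2 (z : nat -> C) (hz : forall n : nat, (1 <= n)%nat -> z n <> Ci) :
  abs_conv_prod z <-> abs_conv_prod (fun n => T (z n)).
Proof.
  unfold abs_conv_prod. split; intros H.
  - apply (cmp_series _ _ H). { intros; apply Cmod_ge_0. }
    destruct (ev_small _ H) as [N HN]. exists N. intros n Hn.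
    apply dir1. specialize (HN n Hn). rewrite Rabs_pos_eq in HN; auto using Cmod_ge_0.
  - apply (cmp_series _ _ H). { intros; apply Cmod_ge_0. }
    destruct (ev_small _ H) as [N HN]. exists N. intros n Hn.
    apply dir2. { apply hz. lia. }
    specialize (HN n Hn). rewrite Rabs_pos_eq in HN; auto using Cmod_ge_0.
Qed.
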